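(* In the category of pointed Frölicher spaces, let $i:A\to X$ be a basepoint-preserving smooth map. Set $i^0=i$ and, for $n\ge1$, let $i^n:\operatorname{cod}(i^{n-1})\to\mathbf T_{i^{n-1}}$ be the canonical inclusion $y\mapsto[y]$ of the codomain of $i^{n-1}$ into its flattened mapping cone. Then the infinite sequence $$A\xrightarrow{i}X\xrightarrow{i^1}\mathbf T_i\xrightarrow{i^2}\mathbf T_{i^1}\xrightarrow{i^3}\mathbf T_{i^2}\to\cdots$$ is right exact, i.e. every two consecutive maps $U\xrightarrow{a}V\xrightarrow{b}W'$ in it form a right exact sequence.
   Context: A Frölicher space is a triple $(X,\mathcal C_X,\mathcal F_X)$ with $\mathcal C_X\subseteq X^{\mathbb R}$, $\mathcal F_X\subseteq\mathbb R^X$, such that $\mathcal F_X=\{f\mid f\circ c\in C^\infty(\mathbb R,\mathbb R)\ \forall c\in\mathcal C_X\}$ and $\mathcal C_X=\{c\mid f\circ c\in C^\infty(\mathbb R,\mathbb R)\ \forall f\in\mathcal F_X\}$. Smooth maps: $g\circ\varphi\in\mathcal F_X$ for all $g\in\mathcal F_Y$. Subspaces carry the initial structure, products the structure generated by $f\circ\pi_i$, coproducts, quotients and pushouts the final structure. $I$ is $[0,1]$ with the subspace structure from $\mathbb R$; $\mathbf I$ is $[0,1]$ with the structure generated by those structure functions of $I$ that are constant on $[0,\epsilon)$ and on $(1-\epsilon,1]$ for some $0<\epsilon<1/4$. For smooth $f:X\to Y$, the flattened mapping cylinder $\mathbf I_f$ is the quotient of $(\mathbf I\times X)\sqcup Y$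 by $(1,x)\sim f(x)$, elements $[t,x]$, $[y]$; in the pointed setting (basepoint $x_0$), the flattened mapping cone $\mathbf T_f$ is the quotient of $\mathbf I_f$ collapsing $(\{0\}\times X)\cup(\mathbf I\times\{x_0\})$ to its basepoint. For pointed $X,W$, $[X,W]$ is the set of basepoint-preserving smooth maps modulo pointed smooth homotopy (smooth $H:I\times X\to W$ with $H(t,x_0)=w_0$), pointed by the constant class. A sequence $U\xrightarrow{a}V\xrightarrow{b}Z$ is right exact if for every pointed Frölicher space $W$, $[Z,W]\xrightarrow{b^*}[V,W]\xrightarrow{a^*}[U,W]$ is exact as pointed sets ($\operatorname{im}b^*=(a^* )^{-1}(\ast)$). *)

(* Defs.v *)
From Stdlib Require Import Reals Relations.
Open Scope R_scope.

Definition smoothR (f : R -> R) : Prop :=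
  exists D : nat -> R -> R,
    (forall x, D O x = f x) /\
    (forall n x, derivable_pt_lim (D n) x (D (S n) x)).

Record Frol := MkFrol {
  fcar :> Type;
  curves : (R -> fcar) -> Prop;
  funs : (fcar -> R) -> Prop;
  funs_spec : forall f, funs f <-> (forall c, curves c -> smoothR (fun t => f (c t)));
  curves_spec : forall c, curves c <-> (forall f, funs f -> smoothR (fun t => f (c t)))
}.

Definition smooth (X Y : Frol) (phi : X -> Y) : Prop :=
  forall g, funs Y g -> funs X (fun x => g (phi x)).

Definition gen_funs (X : Type) (F0 : (X -> R) -> Prop) : Frol.
Proof.
  refine (MkFrol X
    (fun c => forall g, F0 g -> smoothR (fun t => g (c t)))
    (fun f => forall c, (forall g, F0 g -> smoothR (fun t => g (c t))) ->
                        smoothR (fun t => f (c t))) _ _).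
  - intro f; split; intro H; exact H.
  - intro c; split.
    + intros Hc f Hf; exact (Hf c Hc).
    + intros H g Hg; apply H; intros c' Hc'; exact (Hc' g Hg).
Defined.

Definition gen_curves (X : Type) (C0 : (R -> X) -> Prop) : Frol.
Proof.
  refine (MkFrol X
    (fun c => forall f, (forall c', C0 c' -> smoothR (fun t => f (c' t))) ->
                        smoothR (fun t => f (c t)))
    (fun f => forall c, C0 c -> smoothR (fun t => f (c t))) _ _).
  - intro f; split.
    + intros Hf c Hc; exact (Hc f Hf).
    + intros H c Hc; apply H; intros g Hg; exact (Hg c Hc).
  - intro c; split; intro H; exact H.
Defined.

(** The real line (structure generated by the identity; its smooth functions
    are the C^infinity ones by Boman's theorem). *)
Definition Rline : Frol := gen_funs R (fun f => f = fun x => x).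

Definition subspace (X : Frol) (P : X -> Prop) : Frol :=
  gen_funs {x : X | P x}
    (fun h => exists g, funs X g /\ h = fun p => g (proj1_sig p)).

Definition unit_int : Type := {t : R | 0 <= t <= 1}.

Definition Iunit : Frol := subspace Rline (fun t => 0 <= t <= 1).

Definition zeroI : unit_int := exist _ 0 (conj (Rle_refl 0) Rle_0_1).
Definition oneI : unit_int := exist _ 1 (conj Rle_0_1 (Rle_refl 1)).

Definition IF : Frol :=
  gen_funs unit_int
    (fun f => funs Iunit f /\
       exists eps, 0 < eps < 1/4 /\
         (forall s t : unit_int, proj1_sig s < eps -> proj1_sig t < eps -> f s = f t) /\
         (forall s t : unit_int, 1 - eps < proj1_sig s -> 1 - eps < proj1_sig t -> f s = f t)).

Definition prodF (X Y : Frol) : Frol :=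
  gen_funs (X * Y)
    (fun h => (exists f, funs X f /\ h = fun p => f (fst p)) \/
              (exists g, funs Y g /\ h = fun p => g (snd p))).

Definition coprodF (X Y : Frol) : Frol :=
  gen_curves (X + Y)%type
    (fun c => (exists c1, curves X c1 /\ c = fun t => inl (c1 t)) \/
              (exists c2, curves Y c2 /\ c = fun t => inr (c2 t))).

Definition qcar (T : Type) (Rel : T -> T -> Prop) : Type :=
  {P : T -> Prop | exists t, P = clos_refl_sym_trans T Rel t}.

Definition qproj {T : Type} (Rel : T -> T -> Prop) (t : T) : qcar T Rel :=
  exist _ (clos_refl_sym_trans T Rel t) (ex_intro _ t eq_refl).

Definition quotF (X : Frol) (Rel : X -> X -> Prop) : Frol :=
  gen_curves (qcar X Rel)
    (fun c => exists c0, curves X c0 /\ c = fun t => qproj Rel (c0 t)).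

Definition cyl_rel (X Y : Frol) (f : X -> Y) : coprodF (prodF IF X) Y -> coprodF (prodF IF X) Y -> Prop :=
  fun a b => exists x : X, a = inl (oneI, x) /\ b = inr (f x).

Definition cyl (X Y : Frol) (f : X -> Y) : Frol :=
  quotF (coprodF (prodF IF X) Y) (cyl_rel X Y f).

Definition cyl_pt (X Y : Frol) (f : X -> Y) (t : unit_int) (x : X) : cyl X Y f :=
  qproj (cyl_rel X Y f) (inl (t, x)).

Definition cyl_in (X Y : Frol) (f : X -> Y) (y : Y) : cyl X Y f :=
  qproj (cyl_rel X Y f) (inr y).

Record PFrol := MkPFrol { pfr :> Frol; bp : pfr }.

Definition cone_set (X : PFrol) (Y : Frol) (f : X -> Y) (z : cyl X Y f) : Prop :=
  exists (t : unit_int) (x : X), z = cyl_pt X Y f t x /\ (proj1_sig t = 0 \/ x = bp X).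

Definition cone_rel (X : PFrol) (Y : Frol) (f : X -> Y) : cyl X Y f -> cyl X Y f -> Prop :=
  fun a b => cone_set X Y f a /\ cone_set X Y f b.

Definition coneF (X : PFrol) (Y : Frol) (f : X -> Y) : Frol :=
  quotF (cyl X Y f) (cone_rel X Y f).

Definition cone (X : PFrol) (Y : Frol) (f : X -> Y) : PFrol :=
  MkPFrol (coneF X Y f) (qproj (cone_rel X Y f) (cyl_pt X Y f zeroI (bp X))).

Definition cone_incl (X : PFrol) (Y : Frol) (f : X -> Y) (y : Y) : cone X Y f :=
  qproj (cone_rel X Y f) (cyl_in X Y f y).

Definition psmooth (X W : PFrol) (g : X -> W) : Prop :=
  smooth X W g /\ g (bp X) = bp W.

Definition phomotopic (X W : PFrol) (g h : X -> W) : Prop :=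
  exists H : prodF Iunit X -> W,
    smooth (prodF Iunit X) W H /\
    (forall x, H (zeroI, x) = g x) /\
    (forall x, H (oneI, x) = h x) /\
    (forall t, H (t, bp X) = bp W).

Definition hrel (X W : PFrol) : (X -> W) -> (X -> W) -> Prop :=
  clos_refl_sym_trans (X -> W) (phomotopic X W).

(** Right exactness, unfolded on representatives:
    im (b-star) = preimage under (a-star) of the constant class in [V,W], for every pointed W. *)
Definition right_exact (U V Z : PFrol) (a : U -> V) (b : V -> Z) : Prop :=
  forall (W : PFrol) (g : V -> W), psmooth V W g ->
    (hrel U W (fun u => g (a u)) (fun _ => bp W) <->
     exists h : Z -> W, psmooth Z W h /\ hrel V W g (fun v => h (b v))).

Record Stage := MkStage { sdom : PFrol; scod : PFrol; smap : sdom -> scod }.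

Fixpoint stage (A X : PFrol) (i : A -> X) (n : nat) : Stage :=
  match n with
  | O => MkStage A X i
  | S m => let s := stage A X i m in
           MkStage (scod s) (cone (sdom s) (scod s) (smap s))
                   (cone_incl (sdom s) (scod s) (smap s))
  end.

(* Main.v *)
Require Import Defs.
From Stdlib Require Import Reals Relations Lra Lia.
From Stdlib Require Import Classical ClassicalEpsilon FunctionalExtensionality PropExtensionality.
Open Scope R_scope.

Lemma Dinv f x l : derivable_pt_lim f x l -> f x <> 0 ->
  derivable_pt_lim (fun y => / f y) x (- l / (f x)^2).
Proof.
  intros H Hf.
  assert (pr : derivable_pt f x) by (exists l; exact H).
  apply (derive_pt_eq_1 _ _ _ (derivable_pt_inv f x Hf pr)).
  rewrite derive_pt_inv. rewrite (derive_pt_eq_0 _ _ _ pr H).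
  unfold Rsqr; simpl; field; auto.
Qed.

Fixpoint Cn (n : nat) (f : R -> R) : Prop :=
  match n with
  | O => True
  | S m => exists f', (forall x, derivable_pt_lim f x (f' x)) /\ Cn m f'
  end.

Lemma Cn_ext n f g : (forall x, f x = g x) -> Cn n f -> Cn n g.
Proof.
  intros H; replace g with f; auto. apply functional_extensionality; auto.
Qed.

Lemma Cn_le n : forall f, Cn (S n) f -> Cn n f.
Proof.
  induction n; intros f H; simpl; auto.
  destruct H as [f' [H1 H2]]. exists f'; split; auto.
Qed.

Lemma Cn_const n c : Cn n (fun _ => c).
Proof.
  revert c; induction n; intro c; simpl; auto. exists (fun _ => 0); split; auto.
  intro x; apply (derivable_pt_lim_const c x).
Qed.

Lemma Cn_id n : Cn n (fun x => x).
Proof.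
  destruct n; simpl; auto. exists (fun _ => 1); split.
  - intro x; apply derivable_pt_lim_id.
  - apply Cn_const.
Qed.

Lemma Cn_plus n : forall f g, Cn n f -> Cn n g -> Cn n (fun x => f x + g x).
Proof.
  induction n; intros f g Hf Hg; simpl; auto.
  destruct Hf as [f' [Hf1 Hf2]]; destruct Hg as [g' [Hg1 Hg2]].
  exists (fun x => f' x + g' x); split; auto.
  intro x; apply (derivable_pt_lim_plus f g x); auto.
Qed.

Lemma Cn_mult n : forall f g, Cn n f -> Cn n g -> Cn n (fun x => f x * g x).
Proof.
  induction n; intros f g Hf Hg; simpl; auto.
  pose proof (Cn_le _ _ Hf) as Hf0. pose proof (Cn_le _ _ Hg) as Hg0.
  destruct Hf as [f' [Hf1 Hf2]]; destruct Hg as [g' [Hg1 Hg2]].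
  exists (fun x => f' x * g x + f x * g' x); split.
  - intro x; apply (derivable_pt_lim_mult f g x); auto.
  - apply Cn_plus; apply IHn; auto.
Qed.

Lemma Cn_scal n c f : Cn n f -> Cn n (fun x => c * f x).
Proof. intro; apply Cn_mult; auto; apply Cn_const. Qed.

Lemma Cn_inv n : forall f, (forall x, f x <> 0) -> Cn n f -> Cn n (fun x => / f x).
Proof.
  induction n; intros f Hnz Hf; simpl; auto.
  pose proof (Cn_le _ _ Hf) as Hf0.
  destruct Hf as [f' [Hf1 Hf2]].
  exists (fun x => - f' x * ((/ f x) * (/ f x))); split.
  - intro x. eapply derivable_pt_lim_ext; [intro z; reflexivity|].
    replace (- f' x * (/ f x * / f x)) with (- f' x / (f x)^2).
    + apply Dinv; auto.
    + simpl; field; auto.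
  - apply Cn_mult.
    + apply (Cn_scal n (-1) f') in Hf2. eapply Cn_ext; [|exact Hf2]. intro; simpl; ring.
    + apply Cn_mult; apply IHn; auto.
Qed.

Lemma Cn_comp n : forall f c, Cn n f -> Cn n c -> Cn n (fun x => f (c x)).
Proof.
  induction n; intros f c Hf Hc; simpl; auto.
  pose proof (Cn_le _ _ Hc) as Hc0.
  destruct Hf as [f' [Hf1 Hf2]]; destruct Hc as [c' [Hc1 Hc2]].
  exists (fun x => f' (c x) * c' x); split.
  - intro x. apply (derivable_pt_lim_comp c f x); auto.
  - apply Cn_mult; auto.
Qed.

Lemma smoothR_Cn f : smoothR f -> forall n, Cn n f.
Proof.
  intros [D [H0 H1]].
  assert (forall n m, Cn n (D m)).
  { induction n; intro m; simpl; auto. exists (D (S m)); split; auto. }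
  intro n; apply (Cn_ext n (D O)); auto.
Qed.

Lemma Cn_step g : (forall n, Cn n g) ->
  {g' | (forall x, derivable_pt_lim g x (g' x)) /\ forall n, Cn n g'}.
Proof.
  intro H. apply constructive_indefinite_description.
  destruct (H 1%nat) as [g0 [Hg0 _]].
  exists g0; split; auto.
  intro n. destruct (H (S n)) as [g1 [Hg1 Hg2]].
  apply (Cn_ext n g1); auto.
  intro x; apply (uniqueness_limite g x); auto.
Qed.

Fixpoint Dseq (f : R -> R) (Hf : forall n, Cn n f) (n : nat) : {g | forall m, Cn m g} :=
  match n with
  | O => exist _ f Hf
  | S k => let s := Dseq f Hf k in
           exist _ (proj1_sig (Cn_step (proj1_sig s) (proj2_sig s)))
                   (proj2 (proj2_sig (Cn_step (proj1_sig s) (proj2_sig s))))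
  end.

Lemma Cn_smoothR f : (forall n, Cn n f) -> smoothR f.
Proof.
  intro Hf. exists (fun n => proj1_sig (Dseq f Hf n)). split.
  - intro x; reflexivity.
  - intros n x. simpl. apply (proj1 (proj2_sig (Cn_step _ _))).
Qed.

Lemma smoothR_ext f g : (forall x, f x = g x) -> smoothR f -> smoothR g.
Proof. intros H; replace g with f; auto. apply functional_extensionality; auto. Qed.

Lemma smoothR_const c : smoothR (fun _ => c).
Proof. apply Cn_smoothR; intro; apply Cn_const. Qed.
Lemma smoothR_id : smoothR (fun x => x).
Proof. apply Cn_smoothR; intro; apply Cn_id. Qed.
Lemma smoothR_plus f g : smoothR f -> smoothR g -> smoothR (fun x => f x + g x).
Proof. intros; apply Cn_smoothR; intro; apply Cn_plus; apply smoothR_Cn; auto. Qed.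
Lemma smoothR_mult f g : smoothR f -> smoothR g -> smoothR (fun x => f x * g x).
Proof. intros; apply Cn_smoothR; intro; apply Cn_mult; apply smoothR_Cn; auto. Qed.
Lemma smoothR_inv f : (forall x, f x <> 0) -> smoothR f -> smoothR (fun x => / f x).
Proof. intros; apply Cn_smoothR; intro; apply Cn_inv; auto; apply smoothR_Cn; auto. Qed.
Lemma smoothR_comp f c : smoothR f -> smoothR c -> smoothR (fun x => f (c x)).
Proof. intros; apply Cn_smoothR; intro; apply Cn_comp; apply smoothR_Cn; auto. Qed.

Lemma deriv_local F G x y d l : 0 < d -> Rabs (y - x) < d ->
  (forall z, Rabs (z - x) < d -> F z = G z) ->
  derivable_pt_lim G y l -> derivable_pt_lim F y l.
Proof.
  intros Hd Hy Heq HG eps Heps.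
  destruct (HG eps Heps) as [del Hdel].
  assert (Hp : 0 < Rmin del (d - Rabs (y - x))).
  { apply Rmin_pos; [apply cond_pos | lra]. }
  exists (mkposreal _ Hp). intros h Hh0 Hh. simpl in Hh.
  rewrite (Heq (y + h)), (Heq y).
  - apply Hdel; auto. apply Rlt_le_trans with (1 := Hh); apply Rmin_l.
  - unfold Rminus in *; lra.
  - assert (Rabs h < d - Rabs (y - x)) by (apply Rlt_le_trans with (1 := Hh); apply Rmin_r).
    replace (y + h - x) with ((y - x) + h) by ring.
    apply Rle_lt_trans with (1 := Rabs_triang _ _). lra.
Qed.

Definition locCn n F := forall x, exists d, 0 < d /\ exists G, Cn n G /\
   forall z, Rabs (z - x) < d -> F z = G z.

Lemma locCn_Cn n : forall F, locCn n F -> Cn n F.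
Proof.
  induction n; intros F H; simpl; auto.
  assert (Hex : forall x, exists l, derivable_pt_lim F x l).
  { intro x. destruct (H x) as [d [Hd [G [[G' [HG1 HG2]] HG]]]].
    exists (G' x). apply (deriv_local F G x x d); auto.
    replace (x - x) with 0 by ring; rewrite Rabs_R0; auto. }
  exists (fun x => proj1_sig (constructive_indefinite_description _ (Hex x))).
  split.
  - intro x; apply (proj2_sig (constructive_indefinite_description _ (Hex x))).
  - apply IHn. intro x.
    destruct (H x) as [d [Hd [G [[G' [HG1 HG2]] HG]]]].
    exists d; split; auto. exists G'; split; auto.
    intros z Hz.
    apply (uniqueness_limite F z).
    + apply (proj2_sig (constructive_indefinite_description _ (Hex z))).
    + apply (deriv_local F G x z d); auto.
Qed.

Lemma smoothR_local F :
  (forall x, exists d, 0 < d /\ exists G, smoothR G /\ forall z, Rabs (z - x) < d -> F z = G z) ->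
  smoothR F.
Proof.
  intro H. apply Cn_smoothR. intro n. apply locCn_Cn. intro x.
  destruct (H x) as [d [Hd [G [HG1 HG2]]]]. exists d; split; auto.
  exists G; split; auto. apply smoothR_Cn; auto.
Qed.

Lemma smoothR_cont f x : smoothR f -> forall eps, 0 < eps -> exists d, 0 < d /\
  forall z, Rabs (z - x) < d -> Rabs (f z - f x) < eps.
Proof.
  intros [D [H0 H1]] eps Heps.
  assert (Hc : continuity_pt f x).
  { apply derivable_continuous_pt. exists (D 1%nat x).
    apply (derivable_pt_lim_ext (D O)); auto. }
  destruct (Hc eps Heps) as [d [Hd Hd2]].
  exists d; split; auto. intros z Hz.
  destruct (Req_dec z x) as [->|Hne].
  - replace (f x - f x) with 0 by ring; rewrite Rabs_R0; auto.
  - apply (Hd2 z). split; [split; [exact I| auto] | exact Hz].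
Qed.

Definition mk (k : nat) (x : R) : R :=
  if Rlt_dec 0 x then / x ^ k * exp (- / x) else 0.

Lemma exp_pow_INR n z : exp (INR n * z) = exp z ^ n.
Proof.
  induction n.
  - simpl. rewrite Rmult_0_l, exp_0; auto.
  - rewrite S_INR. replace ((INR n + 1) * z) with (INR n * z + z) by ring.
    rewrite exp_plus, IHn. simpl; ring.
Qed.

Lemma mk_bound k h : 0 < h ->
  / h ^ (S k) * exp (- / h) <= INR (S (S k)) ^ (S (S k)) * h.
Proof.
  intro Hh. set (N := S (S k)).
  assert (HN : 0 < INR N) by (apply lt_0_INR; unfold N; lia).
  set (y := / h / INR N).
  assert (Hy : 0 < y) by (unfold y; apply Rdiv_lt_0_compat; auto; apply Rinv_0_lt_compat; auto).
  assert (H1 : y ^ N <= exp (/ h)).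
  { replace (/ h) with (INR N * y) by (unfold y; field; lra).
    rewrite exp_pow_INR. apply pow_incr. split; [lra|].
    pose proof (exp_ineq1_le y); lra. }
  assert (H2 : exp (- / h) <= (h * INR N) ^ N).
  { rewrite exp_Ropp.
    replace ((h * INR N) ^ N) with (/ (y ^ N)).
    - apply Rinv_le_contravar; auto. apply pow_lt; auto.
    - unfold y. rewrite <- pow_inv. f_equal. field; lra. }
  apply Rle_trans with (/ h ^ S k * (h * INR N) ^ N).
  - apply Rmult_le_compat_l; auto. left; apply Rinv_0_lt_compat, pow_lt; auto.
  - right. rewrite Rpow_mult_distr. unfold N. cbn [pow].
    assert (h ^ k <> 0) by (apply pow_nonzero; lra). field. split; lra.
Qed.

Lemma Dlim_eq f x l l' : derivable_pt_lim f x l -> l = l' -> derivable_pt_lim f x l'.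
Proof. intros H <-; exact H. Qed.

Lemma mk_deriv k x : derivable_pt_lim (mk k) x (mk (S (S k)) x - INR k * mk (S k) x).
Proof.
  destruct (Rlt_le_dec 0 x) as [Hx|Hx].
  - apply (deriv_local (mk k) (fun y => / y ^ k * exp (- / y)) x x x); auto.
    + replace (x - x) with 0 by ring; rewrite Rabs_R0; auto.
    + intros z Hz. unfold mk. destruct (Rlt_dec 0 z); auto.
      exfalso. apply Rabs_def2 in Hz. lra.
    + unfold mk. destruct (Rlt_dec 0 x); [|lra].
      assert (Hk : x ^ k <> 0) by (apply pow_nonzero; lra).
      assert (D1 := Dinv (fun y => y ^ k) x _ (derivable_pt_lim_pow x k) Hk).
      assert (D2 := Dinv (fun y => y) x _ (derivable_pt_lim_id x) ltac:(lra)).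
      assert (D3 := derivable_pt_lim_opp _ _ _ D2).
      assert (D4 := derivable_pt_lim_comp _ exp x _ _ D3 (derivable_pt_lim_exp _)).
      assert (D5 := derivable_pt_lim_mult _ _ x _ _ D1 D4).
      assert (D6 := derivable_pt_lim_ext _ (fun y => / y ^ k * exp (- / y)) x _
                 (fun z => eq_refl) D5).
      eapply Dlim_eq; [exact D6|].
      unfold comp, opp_fct, fct_cte, plus_fct, mult_fct. cbv beta.
      destruct k.
      * simpl. field. lra.
      * cbn [pow Nat.pred]. assert (x ^ k <> 0) by (apply pow_nonzero; lra).
        field. split; lra.
  - destruct (Req_dec x 0) as [->|Hne].
    + unfold mk at 2 3. destruct (Rlt_dec 0 0); [lra|].
      replace (0 - INR k * 0) with 0 by ring.
      intros eps Heps.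
      set (C := INR (S (S k)) ^ (S (S k))).
      assert (HC : 0 < C) by (apply pow_lt, lt_0_INR; lia).
      assert (Hd : 0 < eps / C) by (apply Rdiv_lt_0_compat; auto).
      exists (mkposreal _ Hd). intros h Hh0 Hh. simpl in Hh.
      rewrite Rplus_0_l. unfold mk. destruct (Rlt_dec 0 0); [lra|].
      destruct (Rlt_dec 0 h) as [Hp|Hn].
      * rewrite Rabs_pos_eq in Hh by lra.
        pose proof (mk_bound k h Hp) as Hb.
        replace ((/ h ^ k * exp (- / h) - 0) / h - 0) with (/ h ^ S k * exp (- / h)).
        -- rewrite Rabs_pos_eq.
           ++ apply Rle_lt_trans with (1 := Hb). fold C.
              apply Rmult_lt_reg_r with (/ C). apply Rinv_0_lt_compat; auto.
              replace (C * h * / C) with h by (field; lra). exact Hh.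
           ++ left. apply Rmult_lt_0_compat; [apply Rinv_0_lt_compat, pow_lt; auto|apply exp_pos].
        -- assert (h ^ k <> 0) by (apply pow_nonzero; lra). cbn [pow]. field. split; lra.
      * replace ((0 - 0) / h - 0) with 0 by (field; auto). rewrite Rabs_R0; auto.
    + assert (Hxn : x < 0) by lra.
      apply (deriv_local (mk k) (fun _ => 0) x x (- x)); try lra.
      * replace (x - x) with 0 by ring; rewrite Rabs_R0; lra.
      * intros z Hz. unfold mk. destruct (Rlt_dec 0 z); auto.
        exfalso. apply Rabs_def2 in Hz. lra.
      * unfold mk. destruct (Rlt_dec 0 x); [lra|].
        replace (0 - INR k * 0) with 0 by ring. apply (derivable_pt_lim_const 0 x).
Qed.

Lemma Cn_mk n : forall k, Cn n (mk k).
Proof.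
  induction n; intro k; simpl; auto.
  exists (fun x => mk (S (S k)) x - INR k * mk (S k) x); split.
  - apply mk_deriv.
  - apply (Cn_ext n (fun x => mk (S (S k)) x + (- INR k) * mk (S k) x)).
    + intro; ring.
    + apply Cn_plus; auto. apply Cn_scal; auto.
Qed.

Definition ee (x : R) := mk 0 x.

Lemma ee_smooth : smoothR ee.
Proof. apply Cn_smoothR; intro; apply Cn_mk. Qed.
Lemma ee_nonpos x : x <= 0 -> ee x = 0.
Proof. intro; unfold ee, mk; destruct (Rlt_dec 0 x); auto; lra. Qed.
Lemma ee_pos x : 0 < x -> 0 < ee x.
Proof. intro; unfold ee, mk; destruct (Rlt_dec 0 x); [|lra]. simpl.
  rewrite Rinv_1, Rmult_1_l. apply exp_pos. Qed.
Lemma ee_nonneg x : 0 <= ee x.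
Proof. destruct (Rlt_le_dec 0 x); [left; apply ee_pos | right; rewrite ee_nonpos]; auto. Qed.

Definition psi (x : R) := ee (x - 1/4) * / (ee (x - 1/4) + ee (3/4 - x)).

Lemma psi_den x : 0 < ee (x - 1/4) + ee (3/4 - x).
Proof.
  destruct (Rlt_le_dec (1/4) x).
  - pose proof (ee_pos (x - 1/4)); pose proof (ee_nonneg (3/4 - x)); lra.
  - pose proof (ee_pos (3/4 - x)); pose proof (ee_nonneg (x - 1/4)); lra.
Qed.

Lemma psi_smooth : smoothR psi.
Proof.
  unfold psi. apply smoothR_mult.
  - apply (smoothR_comp ee (fun x => x - 1/4)); [apply ee_smooth|].
    apply (smoothR_ext (fun x => x + (- (1/4)))); [intro; ring|].
    apply smoothR_plus; [apply smoothR_id|apply smoothR_const].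
  - apply smoothR_inv. { intro x; pose proof (psi_den x); lra. }
    apply smoothR_plus.
    + apply (smoothR_comp ee (fun x => x - 1/4)); [apply ee_smooth|].
      apply (smoothR_ext (fun x => x + (- (1/4)))); [intro; ring|].
      apply smoothR_plus; [apply smoothR_id|apply smoothR_const].
    + apply (smoothR_comp ee (fun x => 3/4 - x)); [apply ee_smooth|].
      apply (smoothR_ext (fun x => 3/4 + (-1) * x)); [intro; ring|].
      apply smoothR_plus; [apply smoothR_const|]. apply smoothR_mult; [apply smoothR_const|apply smoothR_id].
Qed.

Lemma psi_bounds x : 0 <= psi x <= 1.
Proof.
  unfold psi. pose proof (psi_den x). pose proof (ee_nonneg (x - 1/4)).
  pose proof (ee_nonneg (3/4 - x)). split.
  - apply Rmult_le_pos; auto. left; apply Rinv_0_lt_compat; auto.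
  - apply Rmult_le_reg_r with (ee (x - 1/4) + ee (3/4 - x)); auto.
    rewrite Rmult_assoc, Rinv_l by lra. lra.
Qed.

Lemma psi_low x : x <= 1/4 -> psi x = 0.
Proof. intro; unfold psi; rewrite ee_nonpos by lra; ring. Qed.

Lemma psi_high x : 3/4 <= x -> psi x = 1.
Proof.
  intro; unfold psi; rewrite (ee_nonpos (3/4 - x)) by lra.
  pose proof (ee_pos (x - 1/4)). field. lra.
Qed.

Lemma smooth_curves (X Y : Frol) (phi : X -> Y) :
  smooth X Y phi <-> forall c, curves X c -> curves Y (fun t => phi (c t)).
Proof.
  split.
  - intros H c Hc. apply curves_spec. intros f Hf.
    apply (proj1 (funs_spec X _) (H f Hf) c Hc).
  - intros H g Hg. apply funs_spec. intros c Hc.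
    apply (proj1 (curves_spec Y _) (H c Hc) g Hg).
Qed.

Lemma curves_gc T C0 c : C0 c -> curves (gen_curves T C0) c.
Proof. intros H; cbn; intros f Hf; apply Hf; auto. Qed.

Lemma smooth_gc T C0 (Y : Frol) (phi : T -> Y) :
  (forall c, C0 c -> curves Y (fun t => phi (c t))) -> smooth (gen_curves T C0) Y phi.
Proof.
  intros H g Hg. cbn. intros c Hc.
  apply (proj1 (curves_spec Y _) (H c Hc) g Hg).
Qed.

Lemma curves_Iunit (c : R -> Iunit) : curves Iunit c <-> smoothR (fun t => proj1_sig (c t)).
Proof.
  split.
  - intro H. apply (H (fun p => proj1_sig p)).
    exists (fun x => x). split; auto.
    cbn. intros c' Hc'. apply (Hc' (fun x => x)). reflexivity.
  - intros H h [g [Hg ->]]. cbn in Hg. apply Hg.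
    intros g' ->. exact H.
Qed.

Lemma curves_IF (c : R -> Iunit) : curves Iunit c -> curves IF c.
Proof.
  intros H. cbn. intros g [Hg _].
  apply (proj1 (funs_spec Iunit g) Hg c H).
Qed.

Lemma curves_prod (X Y : Frol) (c : R -> prodF X Y) :
  curves (prodF X Y) c <-> curves X (fun t => fst (c t)) /\ curves Y (fun t => snd (c t)).
Proof.
  split.
  - intros H. split; apply curves_spec; intros f Hf.
    + apply (H (fun p => f (fst p))). left; eauto.
    + apply (H (fun p => f (snd p))). right; eauto.
  - intros [H1 H2] h [[f [Hf ->]]|[f [Hf ->]]].
    + apply (proj1 (curves_spec X _) H1 f Hf).
    + apply (proj1 (curves_spec Y _) H2 f Hf).
Qed.

Lemma sig_eq (A : Type) (P : A -> Prop) x y px py : x = y -> exist P x px = exist P y py.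
Proof. intros ->. f_equal. apply proof_irrelevance. Qed.

Lemma crst_resp {T Z : Type} (Rel : T -> T -> Prop) (F : T -> Z) :
  (forall a b, Rel a b -> F a = F b) -> forall a b, clos_refl_sym_trans T Rel a b -> F a = F b.
Proof. intros HF a b H; induction H; eauto; congruence. Qed.

Definition qlift {T Z : Type} (Rel : T -> T -> Prop) (F : T -> Z) (q : qcar T Rel) : Z :=
  F (proj1_sig (constructive_indefinite_description _ (proj2_sig q))).

Lemma qlift_proj {T Z : Type} (Rel : T -> T -> Prop) (F : T -> Z) :
  (forall a b, Rel a b -> F a = F b) -> forall a, qlift Rel F (qproj Rel a) = F a.
Proof.
  intros HF a. unfold qlift.
  destruct (constructive_indefinite_description _ _) as [t Ht]. simpl in *.
  symmetry. apply (crst_resp Rel F HF). rewrite Ht. apply rst_refl.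
Qed.

Lemma qproj_eq {T : Type} (Rel : T -> T -> Prop) a b :
  clos_refl_sym_trans T Rel a b -> qproj Rel a = qproj Rel b.
Proof.
  intro H. unfold qproj. apply sig_eq.
  apply functional_extensionality; intro x; apply propositional_extensionality; split; intro.
  - apply rst_trans with a; auto. apply rst_sym; auto.
  - apply rst_trans with b; auto.
Qed.

Lemma unit_int_eq (s t : unit_int) : proj1_sig s = proj1_sig t -> s = t.
Proof. destruct s, t; simpl; intros; apply sig_eq; auto. Qed.

Definition psiI (x : R) : unit_int := exist _ (psi x) (psi_bounds x).

Lemma curve_pair (X : Frol) (g : R -> unit_int) (m : R -> X) :
  smoothR (fun t => proj1_sig (g t)) -> curves X m ->
  curves (prodF Iunit X) (fun t => (g t, m t)).
Proof.
  intros H1 H2. apply curves_prod. split; cbn; auto.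
  apply curves_Iunit. exact H1.
Qed.

Lemma hom_curve (X W : Frol) (H : prodF Iunit X -> W) (g : R -> unit_int) (m : R -> X) :
  smooth (prodF Iunit X) W H ->
  smoothR (fun t => proj1_sig (g t)) -> curves X m ->
  curves W (fun t => H (g t, m t)).
Proof.
  intros HH H1 H2. apply (proj1 (smooth_curves _ _ H) HH (fun t => (g t, m t))).
  apply curve_pair; auto.
Qed.

Lemma fun_curve (W : Frol) (c : R -> W) f : curves W c -> funs W f -> smoothR (fun t => f (c t)).
Proof. intros H1 H2. apply (proj1 (curves_spec W c) H1 f H2). Qed.

Lemma const_curve (W : Frol) (w : W) : curves W (fun _ => w).
Proof. apply curves_spec. intros f _. apply smoothR_const. Qed.

Lemma rev_pf (x : R) : 0 <= x <= 1 -> 0 <= 1 - x <= 1.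
Proof. intros; lra. Qed.

Definition revI (t : unit_int) : unit_int :=
  let (x, Hx) := t in exist _ (1 - x) (rev_pf x Hx).

Lemma revI_val t : proj1_sig (revI t) = 1 - proj1_sig t.
Proof. destruct t; reflexivity. Qed.

Lemma prod_curve_split (X : Frol) (c : R -> prodF Iunit X) :
  curves (prodF Iunit X) c ->
  smoothR (fun t => proj1_sig (fst (c t))) /\ curves X (fun t => snd (c t)).
Proof.
  intro H. apply curves_prod in H. destruct H as [H1 H2]. split; auto.
  exact (proj1 (curves_Iunit _) H1).
Qed.

Lemma phom_sym (U W : PFrol) f g : phomotopic U W f g -> phomotopic U W g f.
Proof.
  intros [H [Hs [H0 [H1 Hb]]]].
  exists (fun p => H (revI (fst p), snd p)). split; [|split; [|split]].
  - apply smooth_curves. intros c Hc.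
    destruct (prod_curve_split _ c Hc) as [Hg Hm].
    apply hom_curve; auto.
    apply (smoothR_ext (fun t => 1 + (-1) * proj1_sig (fst (c t)))).
    { intro t. etransitivity; [|symmetry; apply revI_val]. change (fcar Rline) with R; change (fcar Iunit) with unit_int. ring. }
    apply smoothR_plus; [apply smoothR_const|]. apply smoothR_mult; [apply smoothR_const|auto].
  - intro x. simpl. rewrite <- H1. f_equal. f_equal. apply unit_int_eq. simpl; ring.
  - intro x. simpl. rewrite <- H0. f_equal. f_equal. apply unit_int_eq. simpl; ring.
  - intro t; simpl; auto.
Qed.

Lemma psiI_0 x : x <= 1/4 -> psiI x = zeroI.
Proof. intro; apply unit_int_eq; simpl; apply psi_low; auto. Qed.
Lemma psiI_1 x : 3/4 <= x -> psiI x = oneI.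
Proof. intro; apply unit_int_eq; simpl; apply psi_high; auto. Qed.

Lemma psi_aff_smooth (a b : R) (g : R -> R) : smoothR g -> smoothR (fun t => proj1_sig (psiI (a * g t + b))).
Proof.
  intro Hg. simpl. apply (smoothR_comp psi (fun t => a * g t + b)); [apply psi_smooth|].
  apply smoothR_plus; [apply smoothR_mult; [apply smoothR_const|auto]|apply smoothR_const].
Qed.

Definition concat (X W : Frol) (H1 H2 : prodF Iunit X -> W) (p : unit_int * X) : W :=
  if Rle_dec (proj1_sig (fst p)) (1/2)
  then H1 (psiI (2 * proj1_sig (fst p) + 0), snd p)
  else H2 (psiI (2 * proj1_sig (fst p) + -1), snd p).

Lemma phom_trans (U W : PFrol) f g h : phomotopic U W f g -> phomotopic U W g h -> phomotopic U W f h.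
Proof.
  intros [H1 [Hs1 [H10 [H11 Hb1]]]] [H2 [Hs2 [H20 [H21 Hb2]]]].
  exists (concat U W H1 H2). split; [|split; [|split]].
  - apply smooth_curves. intros c Hc.
    destruct (prod_curve_split _ c Hc) as [Hg Hm].
    pose (gm := fun t => @proj1_sig R (fun x => 0 <= x <= 1) (fst (c t))).
    assert (Hg' : smoothR gm) by exact Hg. clear Hg.
    apply curves_spec. intros F HF. apply smoothR_local. intro t0.
    destruct (total_order_T (gm t0) (1/2)) as [[Hlt|Heq]|Hgt].
    + destruct (smoothR_cont gm t0 Hg' (1/2 - gm t0)) as [d [Hd Hd2]]; [lra|].
      exists d; split; auto.
      exists (fun t => F (H1 (psiI (2 * gm t + 0), snd (c t)))). split.
      * apply fun_curve; auto. apply hom_curve; auto. apply psi_aff_smooth; auto.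
      * intros z Hz. specialize (Hd2 z Hz). apply Rabs_def2 in Hd2.
        unfold concat. destruct (Rle_dec _ _) as [r|r]; [reflexivity|].
        exfalso; apply r. assert (gm z <= 1/2) by lra. exact H.
    + destruct (smoothR_cont gm t0 Hg' (1/8)) as [d [Hd Hd2]]; [lra|].
      exists d; split; auto.
      exists (fun t => F (H1 (oneI, snd (c t)))). split.
      * apply fun_curve; auto. apply hom_curve; auto. apply smoothR_const.
      * intros z Hz. specialize (Hd2 z Hz). apply Rabs_def2 in Hd2.
        unfold concat. destruct (Rle_dec _ _) as [r|r].
        -- rewrite psiI_1; [reflexivity|]. assert (3/4 <= 2 * gm z + 0) by lra. exact H.
        -- rewrite psiI_0. { rewrite H20, H11. reflexivity. }
           assert (2 * gm z + -1 <= 1/4) by lra. exact H.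
    + destruct (smoothR_cont gm t0 Hg' (gm t0 - 1/2)) as [d [Hd Hd2]]; [lra|].
      exists d; split; auto.
      exists (fun t => F (H2 (psiI (2 * gm t + -1), snd (c t)))). split.
      * apply fun_curve; auto. apply hom_curve; auto. apply psi_aff_smooth; auto.
      * intros z Hz. specialize (Hd2 z Hz). apply Rabs_def2 in Hd2.
        unfold concat. destruct (Rle_dec _ _) as [r|r]; [|reflexivity].
        exfalso. assert (~ gm z <= 1/2) by lra. exact (H r).
  - intro x. unfold concat. simpl. destruct (Rle_dec 0 (1/2)); [|lra].
    rewrite psiI_0 by lra. auto.
  - intro x. unfold concat. simpl. destruct (Rle_dec 1 (1/2)); [lra|].
    rewrite psiI_1 by lra. auto.
  - intro t. unfold concat. simpl. destruct (Rle_dec _ _); auto.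
Qed.

Lemma phom_const_refl (U W : PFrol) : phomotopic U W (fun _ => bp W) (fun _ => bp W).
Proof.
  exists (fun _ => bp W). repeat split; auto.
  apply smooth_curves; intros; apply const_curve.
Qed.

Lemma hrel_null (U W : PFrol) f g : hrel U W f g ->
  (phomotopic U W (fun _ => bp W) f <-> phomotopic U W (fun _ => bp W) g).
Proof.
  intro H. induction H.
  - split; intro; [eapply phom_trans|eapply phom_trans; [|apply phom_sym]]; eauto.
  - tauto.
  - tauto.
  - tauto.
Qed.

Lemma incl_smooth (U : PFrol) (V : Frol) (a : U -> V) :
  smooth V (cone U V a) (cone_incl U V a).
Proof.
  apply smooth_curves; intros c Hc. unfold cone_incl.
  apply curves_gc. exists (fun t => cyl_in U V a (c t)). split; [|reflexivity].
  apply curves_gc. exists (fun t => inr (c t)). split; [|reflexivity].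
  apply curves_gc. right. exists c. split; auto.
Qed.

Lemma incl_pointed (U V : PFrol) (a : U -> V) : a (bp U) = bp V ->
  cone_incl U V a (bp V) = bp (cone U V a).
Proof.
  intro Ha. unfold cone_incl; simpl. rewrite <- Ha.
  transitivity (qproj (cone_rel U V a) (cyl_pt U V a oneI (bp U))).
  - f_equal. unfold cyl_in, cyl_pt. apply qproj_eq. apply rst_sym, rst_step.
    exists (bp U); split; reflexivity.
  - apply qproj_eq, rst_step. split.
    + exists oneI, (bp U); split; [reflexivity| right; reflexivity].
    + exists zeroI, (bp U); split; [reflexivity| right; reflexivity].
Qed.

Lemma hrel_precomp (U V W : PFrol) (a : U -> V) (ha : psmooth U V a) g1 g2 :
  hrel V W g1 g2 -> hrel U W (fun u => g1 (a u)) (fun u => g2 (a u)).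
Proof.
  intro H. induction H.
  - apply rst_step. destruct H as [H [Hs [H0 [H1 Hb]]]].
    exists (fun p => H (fst p, a (snd p))). split; [|split; [|split]].
    + apply smooth_curves; intros c Hc.
      destruct (prod_curve_split _ c Hc) as [Hg Hm].
      apply (hom_curve V W H (fun t => fst (c t)) (fun t => a (snd (c t)))); auto.
      apply (proj1 (smooth_curves _ _ a) (proj1 ha) _ Hm).
    + intro; simpl; auto.
    + intro; simpl; auto.
    + intro t; simpl. rewrite (proj2 ha). apply Hb.
  - apply rst_refl.
  - apply rst_sym; auto.
  - eapply rst_trans; eauto.
Qed.

Definition psiF (s : unit_int) : R := psi (proj1_sig s).

Lemma psiF_F0 : funs Iunit psiF /\
       exists eps, 0 < eps < 1/4 /\
         (forall s t : unit_int, proj1_sig s < eps -> proj1_sig t < eps -> psiF s = psiF t) /\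
         (forall s t : unit_int, 1 - eps < proj1_sig s -> 1 - eps < proj1_sig t -> psiF s = psiF t).
Proof.
  split.
  - apply funs_spec. intros c Hc. unfold psiF.
    apply (smoothR_comp psi (fun t => proj1_sig (c t))); [apply psi_smooth|].
    exact (proj1 (curves_Iunit c) Hc).
  - exists (1/8). split; [lra|split].
    + intros s t Hs Ht. unfold psiF. rewrite !psi_low; lra.
    + intros s t Hs Ht. unfold psiF. rewrite !psi_high; lra.
Qed.

Theorem main_re (U V : PFrol) (a : U -> V) (ha : psmooth U V a) :
  right_exact U V (cone U V a) a (cone_incl U V a).
Proof.
  intros W g Hg. split.
  - intro Hh.
    assert (Hp : phomotopic U W (fun _ => bp W) (fun u => g (a u))).
    { apply (proj2 (hrel_null U W _ _ Hh)). apply phom_const_refl. }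
    destruct Hp as [L [HLs [HL0 [HL1 HLb]]]].
    pose (K := fun p : unit_int * U => L (psiI (proj1_sig (fst p)), snd p)).
    pose (k0 := fun z : (unit_int * U) + V => match z with inl p => K p | inr v => g v end).
    assert (Hk0 : forall x y, cyl_rel U V a x y -> k0 x = k0 y).
    { intros x y [u [-> ->]]. simpl. unfold K. simpl. rewrite psiI_1 by lra. apply HL1. }
    pose (k1 := qlift (cyl_rel U V a) k0).
    assert (Hk1 : forall z, cone_set U V a z -> k1 z = bp W).
    { intros z [t [x [-> [Ht|Hx]]]]; unfold cyl_pt, k1; rewrite qlift_proj by exact Hk0;
        simpl; unfold K; simpl.
      - rewrite psiI_0 by lra. apply HL0.
      - subst x. apply HLb. }
    assert (Hk1' : forall x y, cone_rel U V a x y -> k1 x = k1 y).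
    { intros x y [Hx Hy]. rewrite (Hk1 x Hx), (Hk1 y Hy). reflexivity. }
    pose (h := qlift (cone_rel U V a) k1).
    assert (Hs0 : smooth (coprodF (prodF IF U) V) W k0).
    { apply smooth_gc. intros c [[c1 [Hc1 ->]]|[c2 [Hc2 ->]]].
      - simpl. unfold K.
        apply curves_prod in Hc1. destruct Hc1 as [Hc1a Hc1b].
        apply (hom_curve U W L (fun t => psiI (proj1_sig (fst (c1 t)))) (fun t => snd (c1 t))); auto.
        simpl. apply (Hc1a psiF). apply psiF_F0.
      - simpl. apply (proj1 (smooth_curves _ _ g) (proj1 Hg) _ Hc2). }
    assert (Hs1 : smooth (cyl U V a) W k1).
    { apply smooth_gc. intros c [c0 [Hc0 ->]].
      assert (E : (fun t => k1 (qproj (cyl_rel U V a) (c0 t))) = (fun t => k0 (c0 t))).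
      { apply functional_extensionality; intro; apply qlift_proj; auto. }
      rewrite E. apply (proj1 (smooth_curves (coprodF (prodF IF U) V) W k0) Hs0 _ Hc0). }
    exists h. split; [split|].
    + apply smooth_gc. intros c [c0 [Hc0 ->]].
      assert (E : (fun t => h (qproj (cone_rel U V a) (c0 t))) = (fun t => k1 (c0 t))).
      { apply functional_extensionality; intro; apply qlift_proj; auto. }
      rewrite E. apply (proj1 (smooth_curves (cyl U V a) W k1) Hs1 _ Hc0).
    + simpl. unfold h. rewrite qlift_proj by exact Hk1'. apply Hk1.
      exists zeroI, (bp U); split; [reflexivity| left; reflexivity].
    + assert (E : g = (fun v => h (cone_incl U V a v))).
      { apply functional_extensionality; intro v. unfold h, cone_incl.
        rewrite qlift_proj by exact Hk1'. unfold k1, cyl_in.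
        rewrite qlift_proj by exact Hk0. reflexivity. }
      rewrite <- E. apply rst_refl.
  - intros [h [[Hhs Hhb] Hrel]].
    apply rst_trans with (fun u => h (cone_incl U V a (a u))).
    + apply (hrel_precomp U V W a ha g _ Hrel).
    + apply rst_sym, rst_step.
      exists (fun p => h (qproj (cone_rel U V a) (cyl_pt U V a (fst p) (snd p)))).
      split; [|split; [|split]].
      * apply smooth_curves; intros c Hc.
        apply (proj1 (smooth_curves _ _ h) Hhs
                 (fun t => qproj (cone_rel U V a) (cyl_pt U V a (fst (c t)) (snd (c t))))).
        apply curves_gc. exists (fun t => cyl_pt U V a (fst (c t)) (snd (c t))). split; [|reflexivity].
        apply curves_gc. exists (fun t => inl (fst (c t), snd (c t))). split; [|reflexivity].
        apply curves_gc. left. exists (fun t => (fst (c t), snd (c t))). split; [|reflexivity].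
        apply curves_prod in Hc. destruct Hc as [Hc1 Hc2].
        apply curves_prod. split; auto. apply curves_IF. exact Hc1.
      * intro x. simpl. rewrite <- Hhb. simpl. f_equal. apply qproj_eq, rst_step. split.
        -- exists zeroI, x; split; [reflexivity| left; reflexivity].
        -- exists zeroI, (bp U); split; [reflexivity| left; reflexivity].
      * intro x. simpl. f_equal. unfold cone_incl. f_equal.
        unfold cyl_pt, cyl_in. apply qproj_eq, rst_step. exists x; split; reflexivity.
      * intro t. simpl. rewrite <- Hhb. simpl. f_equal. apply qproj_eq, rst_step. split.
        -- exists t, (bp U); split; [reflexivity| right; reflexivity].
        -- exists zeroI, (bp U); split; [reflexivity| left; reflexivity].
Qed.

Theorem lemma6 (A X : PFrol) (i : A -> X) (hi : psmooth A X i) :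
  forall n : nat,
    right_exact (sdom (stage A X i n)) (scod (stage A X i n)) (scod (stage A X i (S n)))
      (smap (stage A X i n)) (smap (stage A X i (S n))).
Proof.
  assert (Hps : forall n, psmooth (sdom (stage A X i n)) (scod (stage A X i n)) (smap (stage A X i n))).
  { induction n; simpl; auto. split; [apply incl_smooth | apply incl_pointed; apply IHn]. }
  intro n. simpl. apply main_re. apply Hps.
Qed.
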